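(* Let $f$ be continuous on $[0,1]$, and let $w(x):=\int_0^x f(s)\,ds$ and $\overline{w}:=\int_0^1 w(x)\,dx$. Let $n\ge 2$, $h=1/n$, $x_j=jh$ ($j=0,\dots,n$). Let $\mathcal{M}_h$ be the space of continuous functions on $[0,1]$ that are linear on each $[x_{j-1},x_j]$ and vanish at $0$ and $1$, and let $V_h$ be the space of continuous functions on $[0,1]$ that are quadratic on each $[x_{j-1},x_j]$ and vanish at $0$ and $1$. Let $(w_h,u_h)\in V_h\times\mathcal{M}_h$ be the solution of the reduced discrete problem $$\begin{aligned} (w_h',v_h')+(u_h',v_h)&=(f,v_h)&&\text{for all } v_h\in V_h,\\ (w_h,q_h')&=0&&\text{for all } q_h\in\mathcal{M}_h. \end{aligned}$$ Let $\tilde{\mathcal{M}}_h:=\{v_h: v_h \text{ continuous on } [0,1], \text{ linear on each } [x_{j-1},x_j],\ v_h(0)=v_h(1)\}$. Then $u_h-\overline{u}_h$, where $\overline{u}_h=\int_0^1 u_h(x)\,dx$, is the $L^2(0,1)$-orthogonal projection of $w-\overline{w}$ onto $\tilde{\mathcal{M}}_h$.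
   Context: $(\cdot,\cdot)$ denotes the $L^2(0,1)$ inner product. *)

(* Defs.v *)
From Stdlib Require Import Reals Lra Lia.
From Coquelicot Require Import Coquelicot.
Open Scope R_scope.

Definition node (n j : nat) : R := INR j / INR n.

Definition L2ip (u v : R -> R) : R := RInt (fun x => u x * v x) 0 1.

Definition cont_on_01 (f : R -> R) : Prop :=
  forall x, 0 <= x <= 1 ->
    filterlim f (within (fun y => 0 <= y <= 1) (locally x)) (locally (f x)).

(* linear on each closed mesh cell [x_{j-1}, x_j], j = 1..n
   (continuity on [0,1] follows since neighbouring cells share nodes). *)
Definition pw_linear (n : nat) (v : R -> R) : Prop :=
  forall j : nat, (1 <= j <= n)%nat ->
    exists a b : R, forall x, node n (j - 1) <= x <= node n j -> v x = a + b * x.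

Definition pw_quadratic (n : nat) (v : R -> R) : Prop :=
  forall j : nat, (1 <= j <= n)%nat ->
    exists a b c : R, forall x, node n (j - 1) <= x <= node n j ->
      v x = a + b * x + c * x ^ 2.

Definition Mh (n : nat) (v : R -> R) : Prop :=
  pw_linear n v /\ v 0 = 0 /\ v 1 = 0.

Definition Vh (n : nat) (v : R -> R) : Prop :=
  pw_quadratic n v /\ v 0 = 0 /\ v 1 = 0.

Definition Mh_tilde (n : nat) (v : R -> R) : Prop :=
  pw_linear n v /\ v 0 = v 1.

Definition is_L2_projection (S : (R -> R) -> Prop) (g p : R -> R) : Prop :=
  S p /\ forall q, S q -> L2ip (fun x => g x - p x) q = 0.

(* Main.v *)
Require Import Defs.
From Stdlib Require Import Reals Lra Lia.
From Coquelicot Require Import Coquelicot.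
Open Scope R_scope.

Lemma node0 n : node n 0 = 0.
Proof. unfold node; simpl; unfold Rdiv; ring. Qed.
Lemma noden n : (0<n)%nat -> node n n = 1.
Proof. intros; unfold node; field; apply not_0_INR; lia. Qed.
Lemma node_le n j k : (0<n)%nat -> (j<=k)%nat -> node n j <= node n k.
Proof. intros; unfold node. apply Rmult_le_compat_r.
  left; apply Rinv_0_lt_compat, lt_0_INR; lia. apply le_INR; lia. Qed.
Lemma node_lt n j : (0<n)%nat -> node n j < node n (S j).
Proof. intros; unfold node. rewrite S_INR. apply Rmult_lt_compat_r.
  apply Rinv_0_lt_compat, lt_0_INR; lia. lra. Qed.
Lemma node_cell n j : (0<n)%nat -> (1<=j)%nat -> node n (j-1) < node n j.
Proof. intros. replace j with (S (j-1)) at 2 by lia. apply node_lt; auto. Qed.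
Lemma node_range n j : (0<n)%nat -> (j<=n)%nat -> 0 <= node n j <= 1.
Proof. intros. rewrite <- (node0 n), <- (noden n) by auto. split; apply node_le; lia. Qed.

Lemma cells_gen n h (Sf : nat -> R) : (0<n)%nat ->
  (forall j, (1<=j<=n)%nat -> ex_RInt h (node n (j-1)) (node n j) /\
      RInt h (node n (j-1)) (node n j) = Sf j - Sf (j-1)%nat) ->
  forall m, (m<=n)%nat -> ex_RInt h 0 (node n m) /\ RInt h 0 (node n m) = Sf m - Sf 0%nat.
Proof.
  intros Hn H m. induction m as [|m IH]; intros Hm.
  - rewrite node0. split. apply ex_RInt_point. rewrite RInt_point. unfold zero; simpl; ring.
  - destruct IH as [E1 R1]; [lia|]. destruct (H (S m)) as [E2 R2]; [lia|].
    replace (S m - 1)%nat with m in E2, R2 by lia.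
    split. eapply ex_RInt_Chasles; eauto.
    rewrite <- (RInt_Chasles h 0 (node n m)) by auto. rewrite R1, R2. unfold plus; simpl; ring.
Qed.

Definition PC n (h : R -> R) := forall j, (1<=j<=n)%nat -> exists H : R -> R,
  (forall x, node n (j-1) < x < node n j -> h x = H x) /\
  (forall x, node n (j-1) <= x <= node n j -> continuous H x).

Lemma PC_cell n h j : (0<n)%nat -> PC n h -> (1<=j<=n)%nat -> ex_RInt h (node n (j-1)) (node n j).
Proof. intros Hn HP Hj. destruct (HP j Hj) as [H [E C]].
  assert (Hlt := node_cell n j Hn (proj1 Hj)).
  apply ex_RInt_ext with H. rewrite Rmin_left, Rmax_right by lra. intros; symmetry; apply E; auto.
  apply (ex_RInt_continuous (V:=R_CompleteNormedModule)). rewrite Rmin_left, Rmax_right by lra. auto.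
Qed.

Fixpoint cumul (g : nat -> R) k := match k with 0%nat => 0 | S k => cumul g k + g (S k) end.

Lemma cumul_S g j : (1 <= j)%nat -> g j = cumul g j - cumul g (j-1).
Proof. intros. destruct j; [lia|]. replace (S j - 1)%nat with j by lia. simpl; ring. Qed.

Lemma PC_ex_all n h : (0<n)%nat -> PC n h -> forall m, (m<=n)%nat -> ex_RInt h 0 (node n m).
Proof. intros Hn HP m Hm.
  apply (cells_gen n h (cumul (fun j => RInt h (node n (j-1)) (node n j)))); auto.
  intros j Hj. split. apply PC_cell; auto. apply (cumul_S (fun j => RInt h (node n (j-1)) (node n j))); lia.
Qed.

Lemma PC_ex n h : (0<n)%nat -> PC n h -> ex_RInt h 0 1.
Proof. intros. rewrite <- (noden n) by auto. apply PC_ex_all; auto. Qed.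

Lemma PC_ext n h1 h2 : (forall j, (1<=j<=n)%nat -> forall x, node n (j-1) < x < node n j -> h1 x = h2 x) ->
  PC n h2 -> PC n h1.
Proof. intros E P j Hj. destruct (P j Hj) as [H [E2 C]]. exists H; split; auto.
  intros x Hx; rewrite (E j Hj x Hx); auto. Qed.

Lemma cells_ext n h1 h2 : (0<n)%nat ->
  (forall j, (1<=j<=n)%nat -> forall x, node n (j-1) < x < node n j -> h1 x = h2 x) ->
  PC n h2 -> RInt h1 0 1 = RInt h2 0 1.
Proof. intros Hn E P.
  set (Sf := cumul (fun j => RInt h2 (node n (j-1)) (node n j))).
  destruct (cells_gen n h1 Sf Hn) with (m := n) as [_ R1]; [|lia|].
  - intros j Hj. assert (Hlt := node_cell n j Hn (proj1 Hj)). split.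
    apply ex_RInt_ext with h2. rewrite Rmin_left, Rmax_right by lra. intros; symmetry; apply (E j Hj); auto.
    apply PC_cell; auto.
    unfold Sf; rewrite <- (cumul_S _ j) by lia; cbv beta.
    apply RInt_ext. rewrite Rmin_left, Rmax_right by lra. intros; apply (E j Hj); auto.
  - destruct (cells_gen n h2 Sf Hn) with (m := n) as [_ R2]; [|lia|].
    + intros j Hj. split. apply PC_cell; auto. apply (cumul_S (fun j => RInt h2 (node n (j-1)) (node n j))); lia.
    + rewrite noden in R1, R2 by auto. congruence.
Qed.

Lemma PC_plus n f g : PC n f -> PC n g -> PC n (fun x => f x + g x).
Proof. intros Pf Pg j Hj. destruct (Pf j Hj) as [F [E1 C1]], (Pg j Hj) as [G [E2 C2]].
  exists (fun x => F x + G x); split. intros; rewrite E1, E2; auto.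
  intros x Hx. apply (continuous_plus F G); auto. Qed.
Lemma PC_mult n f g : PC n f -> PC n g -> PC n (fun x => f x * g x).
Proof. intros Pf Pg j Hj. destruct (Pf j Hj) as [F [E1 C1]], (Pg j Hj) as [G [E2 C2]].
  exists (fun x => F x * G x); split. intros; rewrite E1, E2; auto.
  intros x Hx. apply (continuous_mult F G); auto. Qed.
Lemma PC_cont n f : (forall x, continuous f x) -> PC n f.
Proof. intros C j Hj. exists f; split; auto. Qed.
Lemma PC_const n c : PC n (fun _ => c).
Proof. apply PC_cont; intros; apply continuous_const. Qed.
Lemma PC_minus n f g : PC n f -> PC n g -> PC n (fun x => f x - g x).
Proof. intros Pf Pg. apply PC_plus; auto. 
  apply PC_ext with (fun x => (-1) * g x). intros; ring. apply PC_mult; auto. apply PC_const. Qed.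

Lemma cont_mult (f g : R -> R) x : continuous f x -> continuous g x -> continuous (fun y => f y * g y) x.
Proof. intros; apply (continuous_mult (K:=R_AbsRing) f g); auto. Qed.
Lemma cont_plus (f g : R -> R) x : continuous f x -> continuous g x -> continuous (fun y => f y + g y) x.
Proof. intros; apply (continuous_plus (V:=R_NormedModule) f g); auto. Qed.

Lemma deriv_cont (f : R -> R) x l : is_derive f x l -> continuous f x.
Proof. intros H. apply (ex_derive_continuous (K:=R_AbsRing) (V:=R_NormedModule)). exists l; exact H. Qed.

Definition cellC1 n (F dF : R -> R) := forall j, (1<=j<=n)%nat -> exists FF dFF : R -> R,
  (forall x, node n (j-1) <= x <= node n j -> F x = FF x) /\
  (forall x, node n (j-1) < x < node n j -> dF x = dFF x) /\
  (forall x, node n (j-1) <= x <= node n j -> is_derive FF x (dFF x) /\ continuous dFF x).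

Lemma cellC1_PC n F dF : cellC1 n F dF -> PC n F /\ PC n dF.
Proof. intros H; split; intros j Hj; destruct (H j Hj) as [FF [dFF [E1 [E2 D]]]].
  - exists FF; split. intros; apply E1; lra.
    intros x Hx; apply (deriv_cont _ _ (dFF x)); apply D; auto.
  - exists dFF; split; auto. intros; apply D; auto.
Qed.

Lemma ibp n F G dF dG : (0<n)%nat -> cellC1 n F dF -> cellC1 n G dG ->
  RInt (fun x => dF x * G x + F x * dG x) 0 1 = F 1 * G 1 - F 0 * G 0.
Proof.
  intros Hn HF HG.
  destruct (cells_gen n (fun x => dF x * G x + F x * dG x) (fun j => F (node n j) * G (node n j)) Hn)
    with (m:=n) as [_ R]; [|lia|].
  2: rewrite noden, node0 in R; auto.
  intros j Hj. destruct (HF j Hj) as [FF [dFF [E1 [E2 D1]]]], (HG j Hj) as [GG [dGG [E3 [E4 D2]]]].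
  assert (Hlt := node_cell n j Hn (proj1 Hj)).
  set (a := node n (j-1)) in *. set (b := node n j) in *.
  assert (I: is_RInt (fun x => dFF x * GG x + FF x * dGG x) a b (FF b * GG b - FF a * GG a)).
  { replace (FF b * GG b - FF a * GG a) with (minus ((fun x => FF x * GG x) b) ((fun x => FF x * GG x) a))
      by (unfold minus, plus, opp; simpl; ring).
    apply (is_RInt_derive (fun x => FF x * GG x)); rewrite Rmin_left, Rmax_right by lra; intros x Hx.
    - destruct (D1 x Hx), (D2 x Hx).
      eapply is_derive_ext. 2: apply (is_derive_mult FF GG); eauto. intros; reflexivity.
      intros; apply Rmult_comm.
    - destruct (D1 x Hx), (D2 x Hx).
      assert (CF : continuous FF x) by (eapply deriv_cont; eauto).
      assert (CG : continuous GG x) by (eapply deriv_cont; eauto).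
      apply cont_plus; apply cont_mult; auto. }
  assert (I2: is_RInt (fun x => dF x * G x + F x * dG x) a b (F b * G b - F a * G a)).
  { rewrite (E1 a), (E1 b), (E3 a), (E3 b) by lra.
    apply is_RInt_ext with (2 := I). rewrite Rmin_left, Rmax_right by lra. intros x Hx.
    rewrite E1, E2, E3, E4 by lra; auto. }
  split. eexists; eauto. apply is_RInt_unique; auto.
Qed.

Lemma RInt_plusR (f g : R -> R) a b : ex_RInt f a b -> ex_RInt g a b ->
  RInt (fun x => f x + g x) a b = RInt f a b + RInt g a b.
Proof. intros; apply (RInt_plus (V:=R_CompleteNormedModule)); auto. Qed.
Lemma RInt_minusR (f g : R -> R) a b : ex_RInt f a b -> ex_RInt g a b ->
  RInt (fun x => f x - g x) a b = RInt f a b - RInt g a b.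
Proof. intros; apply (RInt_minus (V:=R_CompleteNormedModule)); auto. Qed.
Lemma RInt_scalR (f : R -> R) a b k : ex_RInt f a b ->
  RInt (fun x => k * f x) a b = k * RInt f a b.
Proof. intros; apply (RInt_scal (V:=R_CompleteNormedModule)); auto. Qed.

Lemma derive_loc (g P : R -> R) a b x l : a < x < b -> (forall y, a <= y <= b -> g y = P y) ->
  is_derive P x l -> Derive g x = l.
Proof. intros Hx E D. apply is_derive_unique. apply is_derive_ext_loc with P; auto.
  assert (He: 0 < Rmin (x-a) (b-x)) by (apply Rmin_pos; lra).
  exists (mkposreal _ He). intros y Hy. assert (Hy' : Rabs (y - x) < Rmin (x-a) (b-x)) by exact Hy.
  apply Rabs_lt_between' in Hy'. assert (Rmin (x-a) (b-x) <= x - a) by apply Rmin_l.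
  assert (Rmin (x-a) (b-x) <= b - x) by apply Rmin_r. symmetry; apply E; lra.
Qed.

Lemma is_derive_sub_const (f : R -> R) x l k : is_derive f x l -> is_derive (fun y => f y - k) x l.
Proof. intros H. assert (H2 := is_derive_plus f (fun _ => -k) x l zero H (is_derive_const (-k) x)).
  replace l with (plus l zero) by (unfold plus, zero; simpl; ring). exact H2. Qed.

Lemma cellC1_Derive n F dF j x : cellC1 n F dF -> (1<=j<=n)%nat -> node n (j-1) < x < node n j ->
  Derive F x = dF x.
Proof. intros H Hj Hx. destruct (H j Hj) as [FF [dFF [E1 [E2 D]]]].
  rewrite E2 by auto. apply (derive_loc F FF (node n (j-1)) (node n j)); auto. apply D; lra. Qed.

Lemma pwlin_C1 n q q' k : pw_linear n q -> (forall x, q' x = q x - k) -> cellC1 n q (Derive q').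
Proof. intros Hq Hq' j Hj. destruct (Hq j Hj) as [a [b E]].
  exists (fun x => a + b * x), (fun _ => b). split; auto. split.
  - intros x Hx. apply (derive_loc q' (fun x => a - k + b * x) (node n (j-1)) (node n j)); auto.
    intros y Hy; rewrite Hq', E; auto; ring. auto_derive; auto; ring.
  - intros x Hx; split. auto_derive; auto; ring. apply continuous_const.
Qed.

Lemma pwlin_shift n q k : pw_linear n q -> pw_linear n (fun x => q x - k).
Proof. intros Hq j Hj. destruct (Hq j Hj) as [a [b E]]. exists (a - k), b. intros; rewrite E; auto; ring. Qed.

Lemma pwquad_C1 n w : pw_quadratic n w -> cellC1 n w (Derive w).
Proof. intros Hq j Hj. destruct (Hq j Hj) as [a [b [c E]]].
  exists (fun x => a + b * x + c * x ^ 2), (fun x => b + 2 * c * x). split; auto. split.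
  - intros x Hx. apply (derive_loc w (fun x => a + b * x + c * x ^ 2) (node n (j-1)) (node n j)); auto.
    auto_derive; auto; ring.
  - intros x Hx; split. auto_derive; auto; ring. apply (deriv_cont _ _ (2 * c)). auto_derive; auto; ring.
Qed.

Definition clamp x := Rmax 0 (Rmin 1 x).
Lemma clamp_in x : 0 <= clamp x <= 1.
Proof. unfold clamp, Rmax, Rmin; repeat destruct Rle_dec; lra. Qed.
Lemma clamp_id x : 0 <= x <= 1 -> clamp x = x.
Proof. unfold clamp, Rmax, Rmin; repeat destruct Rle_dec; lra. Qed.
Lemma clamp_lip x y : Rabs (clamp y - clamp x) <= Rabs (y - x).
Proof. unfold clamp, Rmax, Rmin, Rabs; repeat destruct Rle_dec; repeat destruct Rcase_abs; lra. Qed.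

Lemma ft_cont f : cont_on_01 f -> forall x, continuous (fun y => f (clamp y)) x.
Proof. intros Hf x. unfold continuous.
  apply filterlim_comp with (G := within (fun y => 0 <= y <= 1) (locally (clamp x))).
  - intros P [eps HP]. exists eps. intros y Hy. apply HP. 2: apply clamp_in.
    assert (Hy' : Rabs (y - x) < eps) by exact Hy.
    change (Rabs (clamp y - clamp x) < eps). eapply Rle_lt_trans. apply clamp_lip. auto.
  - apply Hf, clamp_in.
Qed.

Lemma prim_cell n r j : (0<n)%nat -> pw_linear n r -> (1<=j<=n)%nat -> exists a b : R,
  (forall x, node n (j-1) <= x <= node n j -> RInt r 0 x = RInt r 0 (node n (j-1)) +
      ((a * x + b / 2 * x ^ 2) - (a * node n (j-1) + b / 2 * node n (j-1) ^ 2))) /\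
  (forall x, node n (j-1) <= x <= node n j -> r x = a + b * x).
Proof. intros Hn Hr Hj. destruct (Hr j Hj) as [a [b E]]. exists a, b. split; auto.
  intros x Hx. set (x0 := node n (j-1)) in *.
  assert (PCr : PC n r).
  { apply (cellC1_PC n r (Derive r)). apply (pwlin_C1 n r r 0); auto. intros; ring. }
  assert (E0 : ex_RInt r 0 x0) by (apply PC_ex_all; auto; lia).
  assert (I : is_RInt (fun t => a + b * t) x0 x (minus ((fun t => a * t + b / 2 * t ^ 2) x) ((fun t => a * t + b / 2 * t ^ 2) x0))).
  { apply (is_RInt_derive (fun t => a * t + b / 2 * t ^ 2)); rewrite Rmin_left, Rmax_right by lra; intros t Ht.
    auto_derive; auto; field. apply (deriv_cont _ _ b). auto_derive; auto; ring. }
  assert (I2 : is_RInt r x0 x ((a * x + b / 2 * x ^ 2) - (a * x0 + b / 2 * x0 ^ 2))).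
  { apply is_RInt_ext with (2 := I). rewrite Rmin_left, Rmax_right by lra. intros t Ht; rewrite E; auto; lra. }
  rewrite <- (RInt_Chasles r 0 x0 x); auto. 2: eexists; eauto.
  rewrite (is_RInt_unique _ _ _ _ I2). reflexivity.
Qed.

Lemma prim_C1 n r : (0<n)%nat -> pw_linear n r -> cellC1 n (fun x => RInt r 0 x) r /\ pw_quadratic n (fun x => RInt r 0 x).
Proof. intros Hn Hr. split; intros j Hj; destruct (prim_cell n r j Hn Hr Hj) as [a [b [E1 E2]]];
  set (x0 := node n (j-1)) in *; set (C := RInt r 0 x0) in *.
  - exists (fun x => C + ((a * x + b / 2 * x ^ 2) - (a * x0 + b / 2 * x0 ^ 2))), (fun x => a + b * x).
    split; auto. split. intros; apply E2; lra.
    intros x Hx; split. auto_derive; auto; field. apply (deriv_cont _ _ b). auto_derive; auto; ring.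
  - exists (C - (a * x0 + b / 2 * x0 ^ 2)), a, (b / 2). intros x Hx. rewrite E1; auto. ring.
Qed.

Lemma PC_opp n f : PC n f -> PC n (fun x => - f x).
Proof. intros P. apply (PC_ext n _ (fun x => (-1) * f x)). intros; ring. apply PC_mult; auto. apply PC_const. Qed.

Ltac pc := repeat first [ assumption | apply PC_const | apply PC_opp | apply PC_plus | apply PC_minus | apply PC_mult ].

Theorem theorem3p3 (f : R -> R) (n : nat) (wh uh : R -> R) :
  cont_on_01 f ->
  (2 <= n)%nat ->
  Vh n wh ->
  Mh n uh ->
  (forall vh, Vh n vh ->
     L2ip (Derive wh) (Derive vh) + L2ip (Derive uh) vh = L2ip f vh) ->
  (forall qh, Mh n qh -> L2ip wh (Derive qh) = 0) ->
  let w := fun x => RInt f 0 x in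
  let wbar := RInt w 0 1 in
  let ubar := RInt uh 0 1 in
  is_L2_projection (Mh_tilde n) (fun x => w x - wbar) (fun x => uh x - ubar).
Proof.
  intros Hf Hn [Hwq [Hw0 Hw1]] [Huq [Hu0 Hu1]] H1 H2 w wbar ubar.
  assert (Hn0 : (0<n)%nat) by lia.
  set (ft := fun y => f (clamp y)).
  set (wt := fun x => RInt ft 0 x).
  assert (Cft : forall x, continuous ft x) by (apply ft_cont; auto).
  assert (Dwt : forall x, is_derive wt x (ft x)).
  { intros x. apply is_derive_RInt with 0; auto.
    exists (mkposreal 1 Rlt_0_1). intros y _. apply (RInt_correct (V:=R_CompleteNormedModule)).
    apply (ex_RInt_continuous (V:=R_CompleteNormedModule)); auto. }
  assert (Cwt : forall x, continuous wt x) by (intros; eapply deriv_cont; eauto).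
  assert (Ew : forall x, 0 <= x <= 1 -> w x = wt x).
  { intros x Hx. unfold w, wt. apply RInt_ext. rewrite Rmin_left, Rmax_right by lra.
    intros t Ht. unfold ft. rewrite clamp_id; auto; lra. }
  assert (Hwbar : wbar = RInt wt 0 1).
  { unfold wbar. apply RInt_ext. rewrite Rmin_left, Rmax_right by lra. intros; apply Ew; lra. }
  split.
  { split. intros j Hj; destruct (Huq j Hj) as [a [b E]]; exists (a - ubar), b; intros; rewrite E; auto; ring.
    rewrite Hu0, Hu1; ring. }
  intros q [Hq Hq01].
  set (qbar := RInt q 0 1).
  set (r := fun x => q x - qbar).
  set (q0 := fun x => q x - q 0).
  assert (Hq0 : Mh n q0).
  { split. apply pwlin_shift; auto. unfold q0; split; [ring| rewrite Hq01; ring]. }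
  assert (Hr : pw_linear n r) by (apply pwlin_shift; auto).
  set (v := fun x => RInt r 0 x).
  destruct (prim_C1 n r Hn0 Hr) as [Cv Qv]. fold v in Cv, Qv.
  assert (CWh : cellC1 n wh (Derive wh)) by (apply pwquad_C1; auto).
  assert (CUh : cellC1 n uh (Derive uh)) by (apply (pwlin_C1 n uh uh 0); auto; intros; ring).
  assert (Cr : cellC1 n r (Derive q0)) by (apply (pwlin_C1 n r q0 (q 0 - qbar)); auto; intros; unfold r, q0; ring).
  assert (Cwt1 : cellC1 n wt ft).
  { intros j Hj. exists wt, ft. split; [|split]; auto. }
  destruct (cellC1_PC _ _ _ CWh) as [PWh PdWh].
  destruct (cellC1_PC _ _ _ CUh) as [PUh PdUh].
  destruct (cellC1_PC _ _ _ Cr) as [Pr Pdq0].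
  destruct (cellC1_PC _ _ _ Cv) as [Pv _].
  destruct (cellC1_PC _ _ _ Cwt1) as [Pwt Pft].
  assert (Pq : PC n q).
  { apply (PC_ext n q (fun x => r x + qbar)). intros; unfold r; ring. pc. }
  assert (Ex : forall h, PC n h -> ex_RInt h 0 1) by (intros; apply (PC_ex n); auto).
  assert (Hv : Vh n v).
  { split; auto. split. unfold v; rewrite RInt_point; reflexivity.
    unfold v, r. rewrite RInt_minusR. 2: apply Ex; auto. 2: apply Ex; pc.
    rewrite RInt_const. unfold scal; simpl; unfold mult; simpl. unfold qbar; ring. }
  assert (E1 : L2ip (Derive wh) (Derive v) = RInt (fun x => Derive wh x * r x) 0 1).
  { apply (cells_ext n); auto. 2: pc. intros j Hj x Hx. rewrite (cellC1_Derive n v r j x); auto. }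
  assert (IA := ibp n wh r (Derive wh) (Derive q0) Hn0 CWh Cr).
  rewrite RInt_plusR in IA by (apply Ex; pc).
  assert (HA := H2 q0 Hq0). unfold L2ip in HA.
  assert (IB := ibp n uh v (Derive uh) r Hn0 CUh Cv).
  rewrite RInt_plusR in IB by (apply Ex; pc).
  assert (IC := ibp n wt v ft r Hn0 Cwt1 Cv).
  rewrite RInt_plusR in IC by (apply Ex; pc).
  assert (Ef : L2ip f v = RInt (fun x => ft x * v x) 0 1).
  { apply RInt_ext. rewrite Rmin_left, Rmax_right by lra. intros x Hx. unfold ft; rewrite clamp_id; auto; lra. }
  assert (HH := H1 v Hv). rewrite E1, Ef in HH. unfold L2ip in HH.
  destruct Hv as [_ [Hv0 Hv1]].
  rewrite Hv0, Hv1, Hw0, Hw1, Hu0, Hu1 in *.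
  assert (Key : RInt (fun x => uh x * r x) 0 1 = RInt (fun x => wt x * r x) 0 1) by lra.
  unfold L2ip.
  transitivity (RInt (fun x => (wt x * r x - uh x * r x) + (qbar * wt x - qbar * uh x) - (wbar - ubar) * q x) 0 1).
  { apply RInt_ext. rewrite Rmin_left, Rmax_right by lra. intros x Hx. rewrite Ew by lra. unfold r. match goal with |- ?a = ?b => change (@eq R a b) end; ring. }
  rewrite RInt_minusR, RInt_plusR, RInt_minusR, RInt_minusR, RInt_scalR, RInt_scalR, RInt_scalR;
    try (apply Ex; pc).
  rewrite Key, Hwbar. fold qbar. unfold ubar. ring.
Qed.
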